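(* Let $R$ be a commutative Noetherian ring with $\dim R=2$ having only finitely many prime ideals of height two. Then $\operatorname{Spec} R$, ordered by inclusion, is a $K$-poset.
   Context: For a poset $U$: $\dim U$ is the supremum of lengths of chains; $L(u)=\{v\le u\}$, $G(u)=\{v\ge u\}$, $L(u)^*=L(u)\setminus\{u\}$, $G(u)^*=G(u)\setminus\{u\}$; height of $u$ is $\dim L(u)$; $H_i$ is the set of nodes of height $i$. For nonempty $A\subseteq U$, $\operatorname{mub}A$ is the set of minimal elements among the common upper bounds of $A$. $[b/c]$ denotes the set of $u$ with $G(u)^*=\{b\}$ and $L(u)^*=\{c\}$. A poset $U$ with $\dim U\le 2$ is a $K$-poset if: (1) $\min U$ and $H_2$ are finite; (2) for distinct $u,v\in\min U$, $\operatorname{mub}\{u,v\}$ is finite; (3) whenever $u>v>w$ for some $v$, $[u/w]$ is infinite. *)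

(* Defs.v *)
From mathcomp Require Import all_boot all_algebra.
From Stdlib Require Import List.
Set Implicit Arguments. Unset Strict Implicit. Unset Printing Implicit Defensive.
Import GRing.Theory.
Local Open Scope ring_scope.

Section RingDefs.
Variable R : comNzRingType.

Definition is_ideal (I : R -> Prop) : Prop :=
  [/\ I 0, (forall x y, I x -> I y -> I (x + y)) & (forall r x, I x -> I (r * x))].

Definition is_prime_ideal (P : R -> Prop) : Prop :=
  [/\ is_ideal P, ~ P 1 & (forall a b, P (a * b) -> P a \/ P b)].

Definition noetherian : Prop :=
  forall f : nat -> R -> Prop,
    (forall n, is_ideal (f n)) ->
    (forall n x, f n x -> f n.+1 x) ->
    exists N, forall n, (N <= n)%N -> forall x, f n x -> f N x.

Definition Spec : Type := {P : R -> Prop | is_prime_ideal P}.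
Definition spec_le (P Q : Spec) : Prop := forall x, proj1_sig P x -> proj1_sig Q x.
End RingDefs.

Section PosetDefs.
Variables (T : Type) (le : T -> T -> Prop).

Definition lt (x y : T) : Prop := le x y /\ x <> y.

Definition finite_sub (A : T -> Prop) : Prop :=
  exists s : list T, forall x, A x -> In x s.

Definition has_chain (A : T -> Prop) (n : nat) : Prop :=
  exists f : nat -> T,
    (forall i, (i <= n)%N -> A (f i)) /\ (forall i, (i < n)%N -> lt (f i) (f i.+1)).

Definition dim_le (A : T -> Prop) (n : nat) : Prop := ~ has_chain A n.+1.
Definition dim_eq (A : T -> Prop) (n : nat) : Prop := has_chain A n /\ dim_le A n.

Definition Lset (u : T) : T -> Prop := fun v => le v u.
Definition Gset (u : T) : T -> Prop := fun v => le u v.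

Definition Hset (i : nat) : T -> Prop := fun u => dim_eq (Lset u) i.

Definition minimal (u : T) : Prop := forall v, le v u -> v = u.

Definition ub (A : T -> Prop) (u : T) : Prop := forall a, A a -> le a u.
Definition mub (A : T -> Prop) : T -> Prop :=
  fun u => ub A u /\ (forall v, ub A v -> le v u -> v = u).

(* [b/c] : u with G(u)^* = {b} and L(u)^* = {c} *)
Definition bc_set (b c : T) : T -> Prop :=
  fun u => (forall w, (le u w /\ w <> u) <-> w = b) /\
           (forall w, (le w u /\ w <> u) <-> w = c).

Definition K_poset : Prop :=
  [/\ dim_le (fun _ => True) 2,
      finite_sub minimal,
      finite_sub (Hset 2),
      (forall u v, minimal u -> minimal v -> u <> v ->
          finite_sub (mub (fun x => x = u \/ x = v)))
    & (forall u v w, lt v u -> lt w v -> ~ finite_sub (bc_set u w))].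
End PosetDefs.

(* Main.v *)
Require Import Defs.
From mathcomp Require Import all_boot all_algebra.
From mathcomp Require Import ring.
From Stdlib Require Import List Classical ClassicalEpsilon FunctionalExtensionality PropExtensionality ProofIrrelevance.
Import GRing.Theory.
Local Open Scope ring_scope.

Section Alg.
Context {R : comNzRingType}.
Implicit Types (I J K : R -> Prop) (a b : R).

Definition sub (I J : R -> Prop) := forall y, I y -> J y.
Definition ssub (I J : R -> Prop) := sub I J /\ exists y, J y /\ ~ I y.

Lemma id0 {I} : is_ideal I -> I 0. Proof. by case. Qed.
Lemma idD {I} a b : is_ideal I -> I a -> I b -> I (a + b).
Proof. by case=> _ H _; apply: H. Qed.
Lemma idM {I} r a : is_ideal I -> I a -> I (r * a).
Proof. by case=> _ _ H; apply: H. Qed.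
Lemma idMr {I} r a : is_ideal I -> I a -> I (a * r).
Proof. rewrite mulrC; exact: idM. Qed.
Lemma idN {I} a : is_ideal I -> I a -> I (- a).
Proof. move=> HI Ha; rewrite -mulN1r; exact: idM. Qed.
Lemma idB {I} a b : is_ideal I -> I a -> I b -> I (a - b).
Proof. move=> HI Ha Hb; apply: idD=>//; exact: idN. Qed.

Lemma noeth_ind (HN : noetherian R) (P : (R -> Prop) -> Prop) :
  (forall I, is_ideal I -> (forall J, is_ideal J -> ssub I J -> P J) -> P I) ->
  forall I, is_ideal I -> P I.
Proof.
move=> step I0 HI0; apply: NNPP => nP0.
pose S := {I : R -> Prop | is_ideal I /\ ~ P I}.
have next : forall s : S, {t : S | ssub (proj1_sig s) (proj1_sig t)}.
  move=> s; have [HI nPI] := proj2_sig s; apply: constructive_indefinite_description.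
  apply: NNPP => H; apply: nPI; apply: step => // J HJ sIJ.
  apply: NNPP => nPJ; apply: H; by exists (exist _ J (conj HJ nPJ)).
pose f := fix f n := match n with 0%N => exist _ I0 (conj HI0 nP0) : S
                                | n'.+1 => proj1_sig (next (f n')) end.
have H1 : forall n, is_ideal (proj1_sig (f n)) by move=> n; case: (proj2_sig (f n)).
have H2 : forall n x, proj1_sig (f n) x -> proj1_sig (f n.+1) x.
  by move=> n x; case: (proj2_sig (next (f n))) => H _; exact: H.
have [N HNN] := HN (fun n => proj1_sig (f n)) H1 H2.
have [_ [y [Hy nHy]]] := proj2_sig (next (f N)).
apply: nHy; exact: (HNN N.+1 (leqnSn N) y Hy).
Qed.

Lemma noeth_max (HN : noetherian R) (F : (R -> Prop) -> Prop) :
  (forall I, F I -> is_ideal I) -> (exists I, F I) ->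
  exists M, F M /\ forall J, F J -> sub M J -> sub J M.
Proof.
move=> HF [I0 FI0].
have H : forall I, is_ideal I -> F I -> exists M, F M /\ forall J, F J -> sub M J -> sub J M.
  apply: noeth_ind => // I HI IH FI.
  case: (classic (forall J, F J -> sub I J -> sub J I)) => [Hm|Hm]; first by exists I.
  have [J HJ] := not_all_ex_not _ _ Hm.
  have [FJ HJ'] := imply_to_and _ _ HJ.
  have [sIJ HJ''] := imply_to_and _ _ HJ'.
  have [y Hy] := not_all_ex_not _ _ HJ''.
  have [Jy nIy] := imply_to_and _ _ Hy.
  apply: (IH J (HF J FJ)) => //; split=> //; by exists y.
exact: H (HF _ FI0) FI0.
Qed.

Fixpoint span (gs : list R) (y : R) : Prop :=
  match gs with nil => y = 0 | g :: gs' => exists c z, span gs' z /\ y = c * g + z end.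

Lemma span_ideal gs : is_ideal (span gs).
Proof.
elim: gs => [|g gs IH] /=.
  split=> //; [move=> a b -> ->; by rewrite addr0 | move=> r a ->; by rewrite mulr0].
split.
- exists 0, 0; split; [exact: id0 | by rewrite mul0r addr0].
- move=> a b [c1 [z1 [H1 ->]]] [c2 [z2 [H2 ->]]].
  exists (c1 + c2), (z1 + z2); split; [exact: idD | ring].
- move=> r a [c [z [H ->]]]; exists (r * c), (r * z); split; [exact: idM | ring].
Qed.

Lemma span_in gs g : In g gs -> span gs g.
Proof.
elim: gs => [|h gs IH] //= [->|Hg].
  exists 1, 0; split; [exact: (id0 (span_ideal gs)) | ring].
exists 0, g; split; [exact: IH | ring].
Qed.

Lemma span_sub I gs : is_ideal I -> (forall g, In g gs -> I g) -> sub (span gs) I.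
Proof.
move=> HI; elim: gs => [|g gs IH] Hgs y /=; first by move->; exact: id0.
move=> [c [z [Hz ->]]]; apply: idD => //.
  apply: idM => //; apply: Hgs; by left.
apply: IH => // h Hh; apply: Hgs; by right.
Qed.

Lemma fin_gen (HN : noetherian R) J : is_ideal J ->
  exists gs, (forall g, In g gs -> J g) /\ sub J (span gs).
Proof.
move=> HJ.
pose F := fun I => exists gs, (forall g, In g gs -> J g) /\ I = span gs.
have [M [[gs [Hgs ->]] Hmax]] : exists M, F M /\ forall K, F K -> sub M K -> sub K M.
  apply: noeth_max => //.
  - by move=> I [gs [_ ->]]; exact: span_ideal.
  - by exists (span nil), nil.
exists gs; split=> // y Jy; apply: NNPP => ny.
apply: ny; apply: (Hmax (span (y :: gs))).
- exists (y :: gs); split=> // g [<-|Hg] //; exact: Hgs.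
- by move=> z Hz /=; exists 0, z; split=> //; ring.
- by exists 1, 0; split; [exact: (id0 (span_ideal gs)) | ring].
Qed.

Definition adj (I : R -> Prop) (a : R) : R -> Prop := fun y => exists i c, I i /\ y = i + c * a.

Lemma adj_ideal {I} a : is_ideal I -> is_ideal (adj I a).
Proof.
move=> HI; split.
- exists 0, 0; split; [exact: id0 | ring].
- move=> y z [i1 [c1 [H1 ->]]] [i2 [c2 [H2 ->]]]; exists (i1 + i2), (c1 + c2); split; [exact: idD | ring].
- move=> r y [i [c [H ->]]]; exists (r * i), (r * c); split; [exact: idM | ring].
Qed.
Lemma adj_incl {I a} : sub I (adj I a).
Proof. by move=> y Hy; exists y, 0; split=> //; ring. Qed.
Lemma adj_el {I} a : is_ideal I -> adj I a a.
Proof. by move=> HI; exists 0, 1; split; [exact: id0 | ring]. Qed.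

Lemma covering (HN : noetherian R) I : is_ideal I ->
  exists l : list (Spec R), (forall Q, In Q l -> sub I (proj1_sig Q)) /\
    forall P : Spec R, sub I (proj1_sig P) -> exists Q, In Q l /\ sub (proj1_sig Q) (proj1_sig P).
Proof.
move: I; apply: noeth_ind => // I HI IH.
case: (classic (is_prime_ideal I)) => [HP|nP].
  exists [:: exist _ I HP]; split; first by move=> Q [<-|[]] /=.
  move=> P HP'; exists (exist _ I HP); split=> //; by left.
case: (classic (I 1)) => [I1|nI1].
  exists nil; split=> // P HP'; exfalso; case: (proj2_sig P) => _ H _; apply: H; exact: HP'.
have [a [b [Hab [na nb]]]] : exists a b, I (a * b) /\ ~ I a /\ ~ I b.
  apply: NNPP => H; apply: nP; split=> // a b Hab.
  case: (classic (I a)) => Ha; [by left|]; case: (classic (I b)) => Hb; [by right|].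
  exfalso; apply: H; by exists a, b.
have [l1 [Hl1 Hl1']] := IH (adj I a) (@adj_ideal I a HI) (conj (@adj_incl I a) (ex_intro _ a (conj (@adj_el I a HI) na))).
have [l2 [Hl2 Hl2']] := IH (adj I b) (@adj_ideal I b HI) (conj (@adj_incl I b) (ex_intro _ b (conj (@adj_el I b HI) nb))).
exists (l1 ++ l2); split.
  move=> Q /in_app_iff [HQ|HQ] y Hy; [apply: Hl1 | apply: Hl2] => //; exact: adj_incl.
move=> P HIP; have [Pi Pn Pp] := proj2_sig P.
have [Pa|Pb] := Pp a b (HIP _ Hab).
  have [Q [HQ1 HQ2]] : exists Q, In Q l1 /\ sub (proj1_sig Q) (proj1_sig P).
    apply: Hl1' => y [i [c [Hi ->]]]; apply: idD => //; [exact: HIP | exact: idM].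
  exists Q; split=> //; apply/in_app_iff; by left.
have [Q [HQ1 HQ2]] : exists Q, In Q l2 /\ sub (proj1_sig Q) (proj1_sig P).
  apply: Hl2' => y [i [c [Hi ->]]]; apply: idD => //; [exact: HIP | exact: idM].
exists Q; split=> //; apply/in_app_iff; by right.
Qed.

End Alg.


Section Sat.
Context {R : comNzRingType}.
Implicit Types (I J K p : R -> Prop) (a b : R).

Definition sat p J : R -> Prop := fun y => exists s, ~ p s /\ J (s * y).

Lemma prime_nmul p a b : is_prime_ideal p -> ~ p a -> ~ p b -> ~ p (a * b).
Proof. by case=> _ _ H na nb /H []. Qed.

Lemma sat_ideal {p J} : is_prime_ideal p -> is_ideal J -> is_ideal (sat p J).
Proof.
move=> Hp HJ; split.
- exists 1; split; [by case: Hp | by rewrite mulr0; exact: id0].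
- move=> y z [s1 [n1 H1]] [s2 [n2 H2]]; exists (s1 * s2); split; first exact: prime_nmul.
  have -> : s1 * s2 * (y + z) = s2 * (s1 * y) + s1 * (s2 * z) by ring.
  apply: idD => //; exact: idM.
- move=> r y [s [n H]]; exists s; split=> //.
  have -> : s * (r * y) = r * (s * y) by ring.
  exact: idM.
Qed.

Lemma sat_incl {p J} : is_prime_ideal p -> sub J (sat p J).
Proof. by move=> Hp y Hy; exists 1; split; [case: Hp | rewrite mul1r]. Qed.

Lemma sat_sat {p J} : is_prime_ideal p -> sub (sat p (sat p J)) (sat p J).
Proof.
move=> Hp y [s [ns [t [nt H]]]]; exists (t * s); split; first exact: prime_nmul.
by rewrite -mulrA.
Qed.

Lemma sat_mono p J K : sub J K -> sub (sat p J) (sat p K).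
Proof. by move=> HJK y [s [ns H]]; exists s; split=> //; apply: HJK. Qed.

Lemma sat_le p q J : sub p q -> sub (sat q J) (sat p J).
Proof. by move=> Hpq y [s [ns H]]; exists s; split=> //; move/Hpq. Qed.

Lemma prime_pow p a n : is_prime_ideal p -> ~ p a -> ~ p (a ^+ n).
Proof.
move=> Hp na; elim: n => [|n IH]; first by rewrite expr0; case: Hp.
rewrite exprS; exact: prime_nmul.
Qed.

Definition desc (B : nat -> R -> Prop) := forall n, sub (B n.+1) (B n).
Definition stab (B : nat -> R -> Prop) := exists N, forall n, (N <= n)%N -> sub (B N) (B n).

Lemma desc_le {B m n} : desc B -> (m <= n)%N -> sub (B n) (B m).
Proof.
move=> HB; elim: n => [|n IH]; first by rewrite leqn0 => /eqP ->.
rewrite leq_eqVlt => /orP [/eqP ->|Hmn] // y Hy; apply: IH => //; exact: HB.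
Qed.

Lemma nakayama u x K gs : is_prime_ideal u -> u x -> is_ideal K ->
  (forall g, In g gs -> exists s, ~ u s /\ exists k r, K k /\ span gs r /\ s * g = k + x * r) ->
  forall g, In g gs -> sat u K g.
Proof.
move=> Hu ux HK; have [Ui Un Up] := Hu.
elim: gs => [|g gs IH] Hgs h //= Hh.
have [s [ns [k [r [Kk [[c [r' [Hr' ->]]] Hs]]]]]] := Hgs g (or_introl erefl).
pose sg := s - x * c.
have nsg : ~ u sg.
  move=> H; apply: ns; have -> : s = sg + x * c by rewrite /sg; ring.
  apply: idD => //; exact: idMr.
have Hg : sg * g = k + x * r' by rewrite /sg; rewrite mulrBl Hs; ring.
have IH' : forall g', In g' gs -> sat u K g'.
  apply: IH => g' Hg'.
  have [s' [ns' [k' [r'' [Kk' [[c' [r3 [Hr3 ->]]] Hs']]]]]] := Hgs g' (or_intror Hg').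
  exists (sg * s'); split; first exact: prime_nmul.
  exists (sg * k' + x * c' * k), (x * c' * r' + sg * r3); split.
    by apply: idD => //; apply: idM.
  split; first by apply: idD; [exact: span_ideal | apply: idM; [exact: span_ideal|] ..].
  have E : sg * s' * g' = sg * (s' * g') by ring.
  rewrite E Hs'.
  have E2 : sg * (k' + x * (c' * g + r3)) = sg * k' + x * c' * (sg * g) + x * (sg * r3) by ring.
  rewrite E2 Hg; ring.
case: Hh => [<-|Hh]; last exact: IH'.
have : sat u K r'.
  have := @span_sub _ _ gs (sat_ideal Hu HK) IH'. by apply.
move=> [t [nt Ht]]; exists (t * sg); split; first exact: prime_nmul.
have -> : t * sg * g = t * k + x * (t * r') by rewrite -mulrA Hg; ring.
by apply: idD => //; apply: idM.
Qed.

End Sat.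


Section PIT.
Context {R : comNzRingType}.
Implicit Types (I J K p : R -> Prop).

Definition plus I J : R -> Prop := fun y => exists i j, I i /\ J j /\ y = i + j.
Lemma plus_ideal I J : is_ideal I -> is_ideal J -> is_ideal (plus I J).
Proof.
move=> HI HJ; split.
- exists 0, 0; split; [exact: id0 | split; [exact: id0 | by rewrite addr0]].
- move=> y z [i1 [j1 [H1 [H1' ->]]]] [i2 [j2 [H2 [H2' ->]]]].
  exists (i1 + i2), (j1 + j2); split; [exact: idD | split; [exact: idD | ring]].
- move=> r y [i [j [H [H' ->]]]]; exists (r * i), (r * j); split; [exact: idM | split; [exact: idM | ring]].
Qed.

Variables (HN : noetherian R) (u v w : R -> Prop).
Hypotheses (Pu : is_prime_ideal u) (Pv : is_prime_ideal v) (Pw : is_prime_ideal w).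
Hypotheses (wv : sub w v) (vu : sub v u).
Variables (a x : R).
Hypotheses (va : v a) (nwa : ~ w a) (ux : u x) (nvx : ~ v x).
Hypothesis Hmin : forall Q, is_prime_ideal Q -> sub w Q -> Q x -> sub Q u -> sub u Q.

Let Wi : is_ideal w. Proof. by case: Pw. Qed.
Let Ui : is_ideal u. Proof. by case: Pu. Qed.
Let Vi : is_ideal v. Proof. by case: Pv. Qed.

Definition I0 := adj w x.

Lemma I0_w : sub w I0. Proof. exact: adj_incl. Qed.
Lemma I0_x : I0 x. Proof. exact: adj_el. Qed.

Lemma assoc I : is_ideal I -> sub (sat u I) I -> sub I0 I -> ~ I 1 ->
  exists g, ~ I g /\ forall c, u c -> I (c * g).
Proof.
move=> HI HsI HI0 nI1.
have colid : forall g, is_ideal (fun c => I (c * g)).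
  move=> g; split.
  - by rewrite mul0r; exact: id0.
  - by move=> c1 c2 H1 H2; rewrite mulrDl; exact: idD.
  - by move=> r c H; rewrite -mulrA; exact: idM.
pose F := fun Q => exists g, ~ I g /\ Q = (fun c => I (c * g)).
have [M [[g [ng ->]] Hmax]] : exists M, F M /\ forall J, F J -> sub M J -> sub J M.
  apply: noeth_max => //.
  - by move=> Q [g [_ ->]].
  - by exists (fun c => I (c * 1)), 1; split=> //; rewrite mulr1.
exists g; split=> //.
have Pm : is_prime_ideal (fun c => I (c * g)).
  split=> //; first by rewrite mul1r.
  move=> b1 b2 H; case: (classic (I (b1 * g))) => Hb1; first by left.
  right.
  have := Hmax (fun c => I (c * (b1 * g))).
  have FF : F (fun c => I (c * (b1 * g))) by exists (b1 * g).
  have SS : sub (fun c => I (c * g)) (fun c => I (c * (b1 * g))).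
    move=> c Hc /=; have -> : c * (b1 * g) = b1 * (c * g) by ring.
    exact: idM.
  move=> /(_ FF SS b2) /=; apply.
  have -> : b2 * (b1 * g) = b1 * b2 * g by ring.
  exact: H.
suff H : sub u (fun c => I (c * g)) by move=> c uc; exact: H.
apply: (Hmin _ Pm).
- by move=> y Hy /=; apply: idMr => //; apply: HI0; exact: I0_w.
- by apply: idMr => //; apply: HI0; exact: I0_x.
- move=> c Hc; apply: NNPP => nuc; apply: ng; apply: HsI; by exists c.
Qed.

Lemma dcc : forall I, is_ideal I -> (sub (sat u I) I -> sub I0 I ->
  forall B, (forall n, is_ideal (B n)) -> (forall n, sub (sat u (B n)) (B n)) -> desc B ->
  (forall n, sub I (B n)) -> stab B).
Proof.
apply: noeth_ind => // I HI IH HsI HI0 B HB HsB HdB HIB.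
case: (classic (I 1)) => [I1|nI1].
  exists 0%N => n _ y _; rewrite -[y]mulr1; apply: idM => //; exact: HIB.
have [g [ng Hg]] := assoc _ HI HsI HI0 nI1.
pose I' := sat u (adj I g).
have HI' : is_ideal I' := sat_ideal Pu (adj_ideal g HI).
have HsI' : sub (sat u I') I' := sat_sat Pu.
have HII' : sub I I' := fun y Hy => sat_incl Pu _ (adj_incl _ Hy).
have HI0' : sub I0 I' := fun y Hy => HII' y (HI0 y Hy).
have gI' : I' g := sat_incl Pu _ (adj_el g HI).
have ssI : ssub I I' by split=> //; exists g.
have IHI' := IH I' HI' ssI HsI' HI0'.
pose A := fun n => sat u (adj (B n) g).
have HdA : desc A.
  move=> n; apply: sat_mono => y [i [c [Hi ->]]]; exists i, c; split=> //; exact: HdB.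
have [NA HNA] : stab A.
  apply: IHI'.
  - move=> n; exact: (sat_ideal Pu (adj_ideal g (HB n))).
  - move=> n; exact: sat_sat.
  - exact: HdA.
  - move=> n; apply: sat_mono => y [i [c [Hi ->]]]; exists i, c; split=> //; exact: HIB.
have HA : forall N n, (NA <= N)%N -> (N <= n)%N -> forall y, B N y ->
    exists s, ~ u s /\ exists b c, B n b /\ s * y = b + c * g.
  move=> N n HN1 HN2 y Hy.
  have H1 : A N y := sat_incl Pu _ (adj_incl _ Hy).
  have H2 : A NA y := desc_le HdA HN1 _ H1.
  have [s [ns [b [c [Hb E]]]]] := HNA n (leq_trans HN1 HN2) y H2.
  by exists s; split=> //; exists b, c.
case: (classic (exists N1, forall y, B N1 y -> I' y -> I y)) => [[N1 HN1]|Hno].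
  exists (maxn NA N1) => n Hn y Hy.
  have [s [ns [b [c [Hb E]]]]] := HA _ n (leq_maxl NA N1) Hn y Hy.
  have cgN : B (maxn NA N1) (c * g).
    have -> : c * g = s * y - b by rewrite E; ring.
    apply: idB => //; [exact: idM | exact: (desc_le HdB Hn)].
  have cgI : I (c * g).
    apply: HN1; [exact: (desc_le HdB (leq_maxr NA N1)) | exact: idM].
  apply: HsB; exists s; split=> //; rewrite E; apply: idD => //; exact: HIB.
have all : forall n, sub I' (B n).
  move=> n.
  have [y Hy] : exists y, ~ (B n y -> I' y -> I y).
    apply: not_all_ex_not => H; apply: Hno; by exists n.
  have [By Hy'] := imply_to_and _ _ Hy; have [I'y nIy] := imply_to_and _ _ Hy'.
  have [s [ns [i [c [Hi E]]]]] := I'y.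
  have nuc : ~ u c.
    move=> uc; apply: nIy; apply: HsI; exists s; split=> //; rewrite E.
    by apply: idD => //; apply: Hg.
  have Bg : B n g.
    apply: HsB; exists c; split=> //.
    have -> : c * g = s * y - i by rewrite E; ring.
    apply: idB => //; [exact: idM | exact: HIB].
  move=> z [t [nt [i' [c' [Hi' E']]]]]; apply: HsB; exists t; split=> //; rewrite E'.
  apply: idD => //; [exact: HIB | exact: idM].
exists NA => n Hn y Hy.
have [s [ns [b [c [Hb E]]]]] := HA NA n (leqnn NA) Hn y Hy.
apply: HsB; exists s; split=> //; rewrite E; apply: idD => //.
apply: all; exact: idM.
Qed.

Lemma pit_false : False.
Proof.
pose J := fun n => sat v (adj w (a ^+ n)).
pose C := fun n => sat u (plus I0 (J n)).
have HJ : forall n, is_ideal (J n) := fun n => sat_ideal Pv (adj_ideal _ Wi).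
have HJd : desc J.
  move=> n; apply: sat_mono => y [w0 [c [Hw ->]]]; exists w0, (c * a); split=> //.
  by rewrite exprS mulrA.
have Hwj : forall n, sub w (J n) := fun n y Hy => sat_incl Pv _ (adj_incl _ Hy).
have I0i : is_ideal I0 := adj_ideal x Wi.
have [N HN'] : stab C.
  apply: (@dcc (sat u I0)).
  - exact: sat_ideal.
  - exact: sat_sat.
  - exact: sat_incl.
  - move=> n; apply: sat_ideal => //; exact: plus_ideal.
  - move=> n; exact: sat_sat.
  - move=> n; apply: sat_mono => y [i [j [Hi [Hj ->]]]]; exists i, j; split=> //; split=> //; exact: HJd.
  - move=> n; apply: sat_mono => y Hy; exists y, 0; split=> //; split; [exact: id0 | ring].
have [gs [Hgs1 Hgs2]] := fin_gen HN (J N) (HJ N).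
have key : forall y, J N y -> exists s, ~ u s /\ exists k r, J N.+1 k /\ span gs r /\ s * y = k + x * r.
  move=> y Hy.
  have H1 : C N y.
    apply: sat_incl => //; exists 0, y; split; [exact: id0 | split=> //; ring].
  have [s [ns [i [j [[w0 [r [Hw0 Ei]]] [Hj E]]]]]] := HN' N.+1 (leqnSn N) y H1.
  exists s; split=> //; exists (w0 + j), r.
  have Hk : J N.+1 (w0 + j) by apply: idD => //; exact: Hwj.
  split=> //; split; last by rewrite E Ei; ring.
  apply: Hgs2.
  have Jxr : J N (x * r).
    have -> : x * r = s * y - (w0 + j) by rewrite E Ei; ring.
    apply: idB => //; [exact: idM | exact: HJd].
  have [t [nt Ht]] := Jxr.
  exists (t * x); split; first exact: prime_nmul.
  by rewrite -mulrA.
have Hsat := @nakayama _ u x (J N.+1) gs Pu ux (HJ N.+1) (fun g Hg => key g (Hgs1 g Hg)).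
have aN : J N (a ^+ N) := sat_incl Pv _ (adj_el _ Wi).
have := @span_sub _ _ gs (sat_ideal Pu (HJ N.+1)) Hsat _ (Hgs2 _ aN).
move=> [tau [ntau [t [nt [w1 [c [Hw1 E]]]]]]].
have Hw : w (a ^+ N * (t * tau - c * a)).
  have -> : a ^+ N * (t * tau - c * a) = t * (tau * a ^+ N) - c * (a * a ^+ N) by ring.
  by rewrite -exprS E; rewrite addrK.
have [Pwi Pwn Pwp] := Pw.
case: (Pwp _ _ Hw) => [H|H]; first exact: (@prime_pow _ w a N Pw nwa H).
have Hv : v (t * tau).
  have -> : t * tau = (t * tau - c * a) + c * a by ring.
  apply: idD => //; [exact: wv | exact: idM].
have [_ _ Pvp] := Pv.
case: (Pvp _ _ Hv) => // H'; apply: ntau; exact: vu.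
Qed.

End PIT.


Section Main.
Context {R : comNzRingType}.
Notation sv := (@proj1_sig (R -> Prop) (@is_prime_ideal R)).

Lemma spec_eq (P Q : Spec R) : sub (sv P) (sv Q) -> sub (sv Q) (sv P) -> P = Q.
Proof.
case: P => p Hp; case: Q => q Hq /= H1 H2.
have E : p = q.
  apply: functional_extensionality => y; apply: propositional_extensionality; split; [exact: H1 | exact: H2].
subst q; f_equal; exact: proof_irrelevance.
Qed.

Lemma neq_wit (P Q : Spec R) y : sv Q y -> ~ sv P y -> P <> Q.
Proof. by move=> H1 H2 E; apply: H2; rewrite E. Qed.

Lemma lt_wit (P Q : Spec R) : Defs.lt (@spec_le R) P Q -> exists y, sv Q y /\ ~ sv P y.
Proof.
move=> [HPQ nPQ]; apply: NNPP => H; apply: nPQ; apply: spec_eq => // y Hy.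
apply: NNPP => nP; apply: H; by exists y.
Qed.

Lemma chain3 (Hdim : dim_le (@spec_le R) (fun _ => True) 2) (a b c d : Spec R) :
  Defs.lt (@spec_le R) a b -> Defs.lt (@spec_le R) b c -> Defs.lt (@spec_le R) c d -> False.
Proof.
move=> Hab Hbc Hcd; apply: Hdim.
exists (fun i => match i with 0%N => a | 1%N => b | 2%N => c | _ => d end); split=> // i.
by case: i => [|[|[|i]]].
Qed.

Lemma avoid_aux (P : Spec R) (l : list (Spec R)) :
  exists z, ~ sv P z /\ forall Q : Spec R, In Q l -> ~ sub (sv Q) (sv P) -> sv Q z.
Proof.
have [Pi Pn Pp] := proj2_sig P.
elim: l => [|Q l [z [nz Hz]]]; first by exists 1.
case: (classic (sub (sv Q) (sv P))) => HQP.
  exists z; split=> // Q0 [<-|H] H'; [by [] | exact: Hz].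
have [c Hc] := not_all_ex_not _ _ HQP; have [Qc nPc] := imply_to_and _ _ Hc.
have [Qi _ _] := proj2_sig Q.
exists (z * c); split; first exact: prime_nmul (proj2_sig P) nz nPc.
move=> Q0 [<-|H] H'; first exact: idM.
have [Q0i _ _] := proj2_sig Q0; apply: idMr => //; exact: Hz.
Qed.

Lemma avoid (u : R -> Prop) (Hu : is_ideal u) (l : list (Spec R)) :
  exists x, u x /\ forall P : Spec R, In P l -> ~ sub u (sv P) -> ~ sv P x.
Proof.
elim: l => [|P l [x [ux Hx]]]; first by exists 0; split=> //; exact: id0.
case: (classic (sub u (sv P))) => HuP.
  by exists x; split=> // P0 [<-|H] H'; [| exact: Hx].
case: (classic (sv P x)) => Px; last first.
  by exists x; split=> // P0 [<-|H] H'; [| exact: Hx].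
have [a Ha] := not_all_ex_not _ _ HuP; have [ua nPa] := imply_to_and _ _ Ha.
have [z [nz Hz]] := avoid_aux P l.
have [Pi Pn Pp] := proj2_sig P.
have nPy : ~ sv P (x + a * z).
  move=> H; have : sv P (a * z).
    have -> : a * z = (x + a * z) - x by ring.
    exact: idB.
  by case/Pp.
exists (x + a * z); split; first by apply: idD => //; exact: idMr.
move=> P0 [<-|H] H' //.
have [P0i _ _] := proj2_sig P0.
case: (classic (sub (sv P0) (sv P))) => HP0.
  by move/HP0.
move=> HP0y; apply: (Hx P0 H H').
have -> : x = (x + a * z) - a * z by ring.
apply: idB => //; apply: (idM _ _ P0i); exact: (Hz P0 H HP0).
Qed.

Lemma zero_ideal : is_ideal (fun y : R => y = 0).
Proof.
split=> //; [by move=> a b -> ->; rewrite addr0 | by move=> r a ->; rewrite mulr0].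
Qed.

Lemma min_list (HN : noetherian R) :
  exists ML : list (Spec R), forall P, minimal (@spec_le R) P -> In P ML.
Proof.
have [l [_ Hl]] := covering HN _ zero_ideal.
exists l => P HP.
have [Q [HQ HQP]] : exists Q, In Q l /\ sub (sv Q) (sv P).
  apply: Hl => y ->; by have [[]] := proj2_sig P.
by rewrite -(HP Q HQP).
Qed.

Lemma pair_lists (HN : noetherian R) (w : Spec R) (ML : list (Spec R)) :
  exists L : list (Spec R), forall z, In z ML -> forall P : Spec R,
    sub (plus (sv w) (sv z)) (sv P) ->
    exists Q, In Q L /\ sub (plus (sv w) (sv z)) (sv Q) /\ sub (sv Q) (sv P).
Proof.
elim: ML => [|z ML [L HL]]; first by exists nil.
have [wi _ _] := proj2_sig w; have [zi _ _] := proj2_sig z.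
have [l [Hl1 Hl2]] := covering HN _ (plus_ideal _ _ wi zi).
exists (l ++ L) => z0 [<-|H] P HP.
  have [Q [HQ1 HQ2]] := Hl2 P HP.
  exists Q; split; [apply/in_app_iff; by left | split=> //; exact: Hl1].
have [Q [HQ1 HQ2]] := HL z0 H P HP.
exists Q; split=> //; apply/in_app_iff; by right.
Qed.


Lemma bc_inf (HN : noetherian R) (Hdim : dim_le (@spec_le R) (fun _ => True) 2)
  (H2 : list (Spec R)) (HH2 : forall z, Hset (@spec_le R) 2 z -> In z H2)
  (u v w : Spec R) :
  Defs.lt (@spec_le R) v u -> Defs.lt (@spec_le R) w v -> ~ finite_sub (bc_set (@spec_le R) u w).
Proof.
move=> Hvu Hwv [s Hs].
have [ML HML] := min_list HN.
have wmin : minimal (@spec_le R) w.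
  move=> z Hz; apply: NNPP => nz; apply: (chain3 Hdim z w v u) => //.
have [L HL] := pair_lists HN w ML.
have [ui _ _] := proj2_sig u.
have [x [ux Hx]] := avoid _ ui (s ++ H2 ++ w :: v :: L).
have inA : forall P, In P s \/ In P H2 \/ w = P \/ v = P \/ In P L -> In P (s ++ H2 ++ w :: v :: L).
  move=> P H; rewrite !in_app_iff /=; tauto.
have nuv : ~ sub (sv u) (sv v).
  move=> H; case: Hvu => H1 H2'; apply: H2'; exact: spec_eq.
have nuw : ~ sub (sv u) (sv w).
  move=> H; apply: nuv => y /H; case: Hwv => H1 _; exact: H1.
have nvx : ~ sv v x by apply: (Hx v) => //; apply: inA; do 3 right; left.
have nwx : ~ sv w x by apply: (Hx w) => //; apply: inA; do 2 right; left.
have [a [va nwa]] := lt_wit _ _ Hwv.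
have [Q [PQ [wQ [Qx [Qu nuQ]]]]] : exists Q, is_prime_ideal Q /\ sub (sv w) Q /\ Q x /\ sub Q (sv u) /\ ~ sub (sv u) Q.
  apply: NNPP => H.
  refine (pit_false HN _ _ _ (proj2_sig u) (proj2_sig v) (proj2_sig w) _ _ _ _ va nwa ux nvx _).
  - by case: Hwv.
  - by case: Hvu.
  move=> Q0 PQ0 wQ0 Q0x Q0u; apply: NNPP => nuQ0; apply: H; by exists Q0.
pose q : Spec R := exist _ Q PQ.
have ltwq : Defs.lt (@spec_le R) w q by split=> //; exact: (neq_wit w q x Qx nwx).
have ltqu : Defs.lt (@spec_le R) q u.
  split=> //; move=> E; apply: nuQ => y Hy; have : sv q y by rewrite E. by [].
have Hq : bc_set (@spec_le R) u w q.
  split=> z; split.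
  - move=> [le_qz neq]; apply: NNPP => nzu.
    have ltqz : Defs.lt (@spec_le R) q z by split=> //; move=> E; apply: neq; rewrite E.
    case: (classic (sub (sv u) (sv z))) => Huz.
      apply: (chain3 Hdim w v u z) => //; split=> //.
      by move=> E; apply: nzu; rewrite E.
    have Hz : Hset (@spec_le R) 2 z.
      split.
        exists (fun i => match i with 0%N => w | 1%N => q | _ => z end); split.
          case=> [|[|i]] _ //=; rewrite /Lset.
          + move=> y /wQ; exact: le_qz.
        move=> [|[|i]] Hi /=; [exact: ltwq | exact: ltqz | by []].
      rewrite /dim_le /has_chain; move=> [f [_ Hf]]; apply: Hdim; by exists f.
    apply: (Hx z) => //; first by apply: inA; right; left; apply: HH2.
    exact: le_qz.
  - move=> ->; split; first exact: Qu.
    by move=> E; apply: (proj2 ltqu); rewrite E.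
  - move=> [le_zq neq].
    have zmin : minimal (@spec_le R) z.
      move=> y Hy; apply: NNPP => ny.
      have ltzq : Defs.lt (@spec_le R) z q by split.
      by apply: (chain3 Hdim y z q u).
    apply: NNPP => nzw.
    have Hpl : sub (plus (sv w) (sv z)) (sv q).
      move=> y [i [j [Hi [Hj ->]]]]; apply: idD; [by have [] := PQ | exact: wQ | exact: le_zq].
    have [Q' [HQ'1 [HQ'2 HQ'3]]] := HL z (HML z zmin) q Hpl.
    have wQ' : sub (sv w) (sv Q').
      move=> y Hy; apply: HQ'2; exists y, 0; split=> //; split; last by rewrite addr0.
      by have [[]] := proj2_sig z.
    have zQ' : sub (sv z) (sv Q').
      move=> y Hy; apply: HQ'2; exists 0, y; split; last by split=> //; rewrite add0r.
      by have [[]] := proj2_sig w.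
    case: (classic (Q' = q)) => EQ.
      apply: (Hx Q'); first by apply: inA; do 4 right.
        by rewrite EQ.
      by rewrite EQ.
    apply: (chain3 Hdim w Q' q u) => //; split=> //.
    move=> E; apply: nzw; apply: wmin; rewrite E; exact: zQ'.
  - move=> ->; split=> //; by case: ltwq.
have := Hx q; rewrite -/(sv q) => /(_ _ nuQ); apply; last exact: Qx.
by apply: inA; left; apply: Hs.
Qed.

End Main.

Local Close Scope ring_scope.

Theorem theorem4p2 (R : comNzRingType) :
  noetherian R ->
  dim_eq (@spec_le R) (fun _ => True) 2 ->
  finite_sub (Hset (@spec_le R) 2) ->
  K_poset (@spec_le R).
Proof.
move=> HN [_ Hdim] [H2 HH2]; split=> //.
- have [ML HML] := min_list HN; by exists ML.
- by exists H2.
- move=> u v Hu Hv nuv.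
  have [ui _ _] := proj2_sig u; have [vi _ _] := proj2_sig v.
  have [l [Hl1 Hl2]] := covering HN _ (plus_ideal _ _ ui vi).
  exists l => m [Hub Hmin].
  have Hpl : sub (plus (proj1_sig u) (proj1_sig v)) (proj1_sig m).
    have [mi _ _] := proj2_sig m.
    move=> y [i [j [Hi [Hj ->]]]]; apply: idD => //.
      exact: (Hub u (or_introl erefl) i Hi).
    exact: (Hub v (or_intror erefl) j Hj).
  have [Q [HQ HQm]] := Hl2 m Hpl.
  suff <- : Q = m by [].
  apply: Hmin => //.
  move=> b [->|->] y Hy; apply: (Hl1 Q HQ).
    exists y, 0%R; split=> //; split; [exact: id0 | by rewrite addr0].
  exists 0%R, y; split; [exact: id0 | split=> //; by rewrite add0r].
- move=> u v w Hvu Hwv; exact: (bc_inf HN Hdim _ HH2 u v w Hvu Hwv).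
Qed.
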